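(* Let $(X,Y)$ be a minimum $s$-$t$ cut in the flow network $G_N$. Then $A \cap X$ is an optimal seed set, i.e. $\pi(A \cap X) \ge \pi(S)$ for every seed set $S$.
   Context: Let $G=(V,E)$ be a finite undirected graph whose vertices are agents. Each agent $i$ has a criticality parameter $\theta_i \in [0,1]$, and the product has a parameter $\phi \in [0,1]$. Agent $i$ is accepting if $\theta_i \le \phi$ and rejecting if $\theta_i > \phi$. A seed set is a set $S \subseteq V$ of accepting agents. $V(S)$ denotes the set of agents $i$ for which there exist $j \in S$ and a path in $G$ from $i$ to $j$ all of whose internal vertices are accepting (paths of length $0$ allowed, so $S \subseteq V(S)$). $V^+(S)$ is the set of accepting agents in $V(S)$ and $V^-(S)$ the set of rejecting agents in $V(S)$. Given constants $p, q > 0$, the payoff of a seed set $S$ is $\pi(S) = p\,|V^+(S)| - q\,|V^-(S)|$; an optimal seed set is a seed set maximizing $\pi$ over all seed sets. For an accepting agent $i$, the cluster of $i$ is $C_i = V(\{i\})$, its interior is $C_i^o = V^+(\{i\})$, and its boundary is $C_i^b = V^-(\{i\})$. Flow network $G_N$: let $C_1,\dots,C_k$ be the distinct sets of the form $C_i$ ($i$ accepting); their interiors are pairwise disjoint. For each $m$ choose one canonical accepting agent $a_m \in C_m^o$, and let $A = \{a_1,\dots,a_k\}$. Let $R = \bigcup_{m} C_m^b$. The directed network $G_N$ has vertex set $\{s,t\} \cup A \cup R$, an edge $s \to a_m$ of capacity $p\,|C_m^o|$ for each $m$, an edge $r \to t$ of capacity $q$ for each $r \in R$, and an edge $a_m \to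 r$ of infinite capacity whenever $r \in C_m^b$. An $s$-$t$ cut $(X,Y)$ is a partition of the vertex set with $s \in X$, $t \in Y$; its value is the total capacity of edges from $X$ to $Y$, and a minimum cut is one of minimum value. *)

(* Defs.v *)
From HB Require Import structures.
From mathcomp Require Import all_boot all_order all_algebra.
From Stdlib Require Import ClassicalEpsilon.
Set Implicit Arguments. Unset Strict Implicit. Unset Printing Implicit Defensive.
Import Order.TTheory GRing.Theory Num.Theory.
Local Open Scope ring_scope.

Definition asbool (P : Prop) : bool :=
  if excluded_middle_informative P then true else false.

Section Model.
Variables (R : realFieldType) (V : finType).
(* e : adjacency relation of the undirected graph G (assumed symmetric in the theorem) *)
Variables (e : rel V) (theta : V -> R) (phi : R).

Definition accepting (i : V) : bool := theta i <= phi.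

(* There is a path i = x0, x1, ..., xk = j in G whose internal vertices
   x1, ..., x(k-1) are all accepting (k = 0 allowed). *)
Definition linked (i j : V) : Prop :=
  exists p : seq V, [/\ path e i p, last i p = j & all accepting (behead (belast i p))].

Definition Vreach (S : {set V}) : {set V} :=
  [set i | asbool (exists2 j, j \in S & linked i j)].
Definition Vplus (S : {set V}) : {set V} := [set i in Vreach S | accepting i].
Definition Vminus (S : {set V}) : {set V} := [set i in Vreach S | ~~ accepting i].

Definition seed_set (S : {set V}) : bool := [forall i in S, accepting i].

Definition payoff (p q : R) (S : {set V}) : R :=
  p * #|Vplus S|%:R - q * #|Vminus S|%:R.

Definition cluster (i : V) : {set V} := Vreach [set i].
Definition interior (i : V) : {set V} := Vplus [set i].
Definition boundary (i : V) : {set V} := Vminus [set i].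

Definition canonical_set (A : {set V}) : Prop :=
  [/\ forall a, a \in A -> accepting a,
      forall i, accepting i -> exists2 a, a \in A & cluster a = cluster i
    & forall a b, a \in A -> b \in A -> cluster a = cluster b -> a = b].

Definition Rset (A : {set V}) : {set V} := \bigcup_(a in A) boundary a.

Definition node := (V + bool)%type.
Definition src : node := inr true.
Definition snk : node := inr false.

Definition GN_verts (A : {set V}) : {set node} :=
  [set src; snk] :|: [set inl v | v in A :|: Rset A].

(* capacity of the edge u -> v: None = no edge, Some None = infinite capacity,
   Some (Some c) = finite capacity c *)
Definition cap (p q : R) (A : {set V}) (u v : node) : option (option R) :=
  match u, v with
  | inr true, inl a => if a \in A then Some (Some (p * #|interior a|%:R)) else None
  | inl r, inr false => if r \in Rset A then Some (Some q) else None
  | inl a, inl r => if (a \in A) && (r \in boundary a) then Some None else None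
  | _, _ => None
  end.

(* An s-t cut (X, Y): X, Y partition the vertex set of G_N, s in X, t in Y.
   We represent it by X; Y is GN_verts A :\: X. *)
Definition is_cut (A : {set V}) (X : {set node}) : bool :=
  [&& X \subset GN_verts A, src \in X & snk \notin X].

Definition crossing (A : {set V}) (X : {set node}) (u v : node) : bool :=
  (u \in X) && (v \in GN_verts A :\: X).

Definition fincap (c : option (option R)) : R :=
  if c is Some (Some x) then x else 0.

(* value of the cut: None = +infinity *)
Definition cut_value (p q : R) (A : {set V}) (X : {set node}) : option R :=
  if [exists u, exists v, crossing A X u v && (cap p q A u v == Some None)]
  then None
  else Some (\sum_u \sum_(v | crossing A X u v) fincap (cap p q A u v)).

Definition le_ext (x y : option R) : bool :=
  match x, y with
  | _, None => true
  | None, Some _ => false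
  | Some a, Some b => a <= b
  end.

Definition min_cut (p q : R) (A : {set V}) (X : {set node}) : Prop :=
  is_cut A X /\ forall X', is_cut A X' -> le_ext (cut_value p q A X) (cut_value p q A X').

Definition seeds_of_cut (A : {set V}) (X : {set node}) : {set V} :=
  A :&: [set v | inl v \in X].

End Model.

(* Main.v *)
Require Import Defs.
From HB Require Import structures.
From mathcomp Require Import all_boot all_order all_algebra.
From mathcomp Require Import ring.
From Stdlib Require Import ClassicalEpsilon.
Set Implicit Arguments. Unset Strict Implicit. Unset Printing Implicit Defensive.
Import Order.TTheory GRing.Theory Num.Theory.
Local Open Scope ring_scope.


Lemma asboolP (P : Prop) : asbool P = true <-> P.
Proof. by rewrite /asbool; case: excluded_middle_informative. Qed.

Section Graph.
Variables (R : realFieldType) (V : finType) (e : rel V) (theta : V -> R) (phi : R).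
Hypothesis esym : symmetric e.
Local Notation acc := (accepting theta phi).
Local Notation linked := (linked e theta phi).

Inductive lk : V -> V -> Prop :=
| lk_refl i : lk i i
| lk_edge i j : e i j -> lk i j
| lk_step i k j : e i k -> acc k -> lk k j -> lk i j.

Lemma linked_lk i j : linked i j -> lk i j.
Proof.
case=> p; elim: p i => [|k s IH] i [pth lst al].
  by rewrite /= in lst; rewrite -lst; exact: lk_refl.
move: pth => /= /andP[eik pth]; rewrite /= in lst al.
case: s IH pth lst al => [|y s] IH pth lst al.
  by rewrite /= in lst; rewrite -lst; exact: lk_edge.
move: al => /= /andP[ak al].
apply: (lk_step eik ak); apply: IH; split => //.
Qed.

Lemma lk_linked i j : lk i j -> linked i j.
Proof.
elim=> {i j} [i|i j eij|i k j eik ak _ [p [pth lst al]]].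
- by exists [::].
- by exists [:: j]; rewrite /= eij.
exists (k :: p); split => //=; first by rewrite eik.
by case: p pth lst al => [|y s] //= _ _ ->; rewrite ak.
Qed.

Lemma lk_cat x y z : lk x y -> acc y -> lk y z -> lk x z.
Proof.
elim=> {x y} [x|x y exy|x k y exk ak _ IH] ay yz //.
- exact: lk_step exy ay yz.
- exact: lk_step exk ak (IH ay yz).
Qed.

Lemma lk_rev i j : lk i j -> lk j i.
Proof.
elim=> {i j} [i|i j eij|i k j eik ak _ IH].
- exact: lk_refl.
- by apply: lk_edge; rewrite esym.
- apply: lk_cat IH ak _; apply: lk_edge; by rewrite esym.
Qed.

Lemma in_Vreach S i : (i \in Vreach e theta phi S) = asbool (exists2 j, j \in S & linked i j).
Proof. by rewrite inE. Qed.

Lemma in_cluster a i : i \in cluster e theta phi a <-> lk i a.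
Proof.
rewrite /cluster in_Vreach; split.
  by move/asboolP=> [j]; rewrite inE => /eqP -> /linked_lk.
by move=> h; apply/asboolP; exists a; rewrite ?inE //; apply: lk_linked.
Qed.

Lemma cluster_eq a i : acc a -> acc i -> i \in cluster e theta phi a ->
  cluster e theta phi i = cluster e theta phi a.
Proof.
move=> aa ai /in_cluster ia; apply/setP => x; apply/idP/idP => /in_cluster h; apply/in_cluster.
- exact: lk_cat h ai ia.
- exact: lk_cat h aa (lk_rev ia).
Qed.

Lemma Vreach_bigcup S : Vreach e theta phi S = \bigcup_(j in S) cluster e theta phi j.
Proof.
apply/setP => i; rewrite in_Vreach; apply/idP/bigcupP.
  move/asboolP => [j jS lij]; exists j => //; apply/in_cluster; exact: linked_lk.
case=> j jS /in_cluster h; apply/asboolP; exists j => //; exact: lk_linked.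
Qed.

End Graph.



Section Card.
Variables (R : realFieldType) (V : finType) (e : rel V) (theta : V -> R) (phi : R).
Hypothesis esym : symmetric e.
Variable A : {set V}.
Hypothesis canA : canonical_set e theta phi A.
Local Notation acc := (accepting theta phi).

Lemma in_Vplus (T : {set V}) i : (i \in Vplus e theta phi T) =
  [exists a in T, i \in interior e theta phi a].
Proof.
rewrite /Vplus /interior /Vplus inE Vreach_bigcup.
apply/andP/existsP.
  by case=> /bigcupP [a aT ia] ai; exists a; rewrite aT inE -/(cluster _ _ _ a) ia ai.
case=> a /andP [aT]; rewrite inE => /andP [ia ai]; split => //.
by apply/bigcupP; exists a.
Qed.

Lemma interior_uniq a b i : a \in A -> b \in A ->
  i \in interior e theta phi a -> i \in interior e theta phi b -> a = b.
Proof.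
case: canA => accA _ uniqA aA bA.
rewrite /interior /Vplus !inE => /andP [ia ai] /andP [ib _].
have ia' : i \in cluster e theta phi a by rewrite /cluster in_Vreach; exact ia.
have ib' : i \in cluster e theta phi b by rewrite /cluster in_Vreach; exact ib.
apply: uniqA => //.
rewrite -(cluster_eq esym (accA a aA) ai ia').
exact: (cluster_eq esym (accA b bA) ai ib').
Qed.

Lemma card_Vplus (T : {set V}) : T \subset A ->
  #|Vplus e theta phi T| = (\sum_(a in T) #|interior e theta phi a|)%N.
Proof.
move=> TA.
rewrite [RHS](eq_bigr (fun a => \sum_i (if i \in interior e theta phi a then 1 else 0))%N); last first.
  by move=> a _; rewrite -sum1_card big_mkcond.
rewrite -sum1_card big_mkcond /= [RHS]exchange_big /=; apply: eq_bigr => i _.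
rewrite in_Vplus; case: existsP => [[a /andP [aT ia]]|none].
  rewrite (bigD1 a) //= ia big1 ?addn0 // => b /andP [bT nba].
  case: ifP => // ib; move: nba; rewrite (interior_uniq (subsetP TA b bT) (subsetP TA a aT) ib ia).
  by rewrite eqxx.
by rewrite big1 // => a aT; case: ifP => // ia; case: none; exists a; rewrite aT.
Qed.

End Card.



Section Cut.
Variables (R : realFieldType) (V : finType) (e : rel V) (theta : V -> R) (phi p q : R).
Variable A : {set V}.
Local Notation RA := (Rset e theta phi A).
Local Notation GN := (GN_verts e theta phi A).

Lemma inl_GN y : (inl y \in GN) = (y \in A :|: RA).
Proof.
rewrite /GN_verts in_setU !inE /= -in_setU.
by apply: mem_imset => a b [->].
Qed.

Lemma src_GN : src V \in GN. Proof. by rewrite /GN_verts !inE eqxx. Qed.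
Lemma snk_GN : snk V \in GN. Proof. by rewrite /GN_verts !inE eqxx orbT. Qed.

Lemma cut_sum (X : {set node V}) : is_cut e theta phi A X ->
  \sum_u \sum_(v | crossing e theta phi A X u v) fincap (cap e theta phi p q A u v) =
  \sum_(a in A | inl a \notin X) p * #|interior e theta phi a|%:R
  + \sum_(x in RA | inl x \in X) q.
Proof.
case/and3P => XG sX tX.
rewrite big_sumType big_bool /= big1_eq addr0 addrC.
congr (_ + _).
  rewrite big_sumType /= big1_eq addr0.
  rewrite big_mkcond [RHS]big_mkcond /=; apply: eq_bigr => y _.
  rewrite /crossing in_setD inl_GN in_setU sX /=.
  by case: (y \in A); case: (inl y \in X); case: (y \in RA).
rewrite [RHS]big_mkcond /=; apply: eq_bigr => x _.
rewrite big_mkcond big_sumType big_bool /= big1; last first.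
  by move=> y _; case: ifP => //; case: ifP.
move: tX (snk_GN); rewrite /snk => tX sG.
rewrite /crossing if_same add0r add0r in_setD sG (negbTE tX) andbT.
by case: (inl x \in X); case: (x \in RA); rewrite /= ?add0r ?addr0.
Qed.

End Cut.



Section Main.
Variables (R : realFieldType) (V : finType) (e : rel V) (theta : V -> R) (phi p q : R).
Hypothesis esym : symmetric e.
Variable A : {set V}.
Hypothesis canA : canonical_set e theta phi A.
Local Notation acc := (accepting theta phi).
Local Notation RA := (Rset e theta phi A).
Local Notation GN := (GN_verts e theta phi A).
Local Notation Vm := (Vminus e theta phi).
Local Notation Vp := (Vplus e theta phi).

Lemma accA a : a \in A -> acc a.
Proof. by case: canA => h _ _; apply: h. Qed.

Lemma RA_rej x : x \in RA -> ~~ acc x.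
Proof. by case/bigcupP => a _; rewrite /boundary /Vminus inE => /andP []. Qed.

Lemma Vm_boundary (T : {set V}) x : x \in Vm T -> exists2 a, a \in T & x \in boundary e theta phi a.
Proof.
rewrite /Vminus inE Vreach_bigcup => /andP [/bigcupP [a aT xa] xr].
by exists a => //; rewrite /boundary /Vminus inE xr andbT.
Qed.

Lemma Vm_RA (T : {set V}) : T \subset A -> Vm T \subset RA.
Proof.
move=> TA; apply/subsetP => x /Vm_boundary [a aT xa].
by apply/bigcupP; exists a => //; apply: (subsetP TA).
Qed.

Definition mkX (T : {set V}) : {set node V} :=
  [set u : node V | if u is inl v then (v \in T) || (v \in Vm T) else u == src V].

Definition Fv (T : {set V}) : R :=
  \sum_(a in A | a \notin T) p * #|interior e theta phi a|%:R + q * #|Vm T|%:R.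

Definition Ptot : R := \sum_(a in A) p * #|interior e theta phi a|%:R.

Lemma Fv_payoff (T : {set V}) : T \subset A -> Fv T = Ptot - payoff e theta phi p q T.
Proof.
move=> TA; rewrite /Fv /Ptot /payoff [\sum_(a in A) _](bigID (fun a => a \in T)) /=.
rewrite (card_Vplus esym canA TA) natr_sum mulr_sumr.
rewrite [X in _ = X + _ - _](eq_bigl (fun a => a \in T)); last first.
  by move=> a /=; apply/andP/idP => [[]//|aT]; split => //; apply: (subsetP TA).
set s1 := \sum_(i in T) _; set s2 := \sum_(i | _) _.
ring.
Qed.


Lemma boundary_Vm (T : {set V}) a r : a \in T -> r \in boundary e theta phi a -> r \in Vm T.
Proof.
move=> aT; rewrite /boundary /Vminus !Vreach_bigcup !inE => /andP [/bigcupP [b] ] .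
rewrite inE => /eqP -> ra rr; rewrite rr andbT; apply/bigcupP; by exists a.
Qed.

Lemma Vm_rej (T : {set V}) x : x \in Vm T -> ~~ acc x.
Proof. by rewrite /Vminus inE => /andP []. Qed.

Lemma in_mkX (T : {set V}) v : (inl v \in mkX T) = (v \in T) || (v \in Vm T).
Proof. by rewrite /mkX in_set. Qed.

Lemma mkX_cut (T : {set V}) : T \subset A -> is_cut e theta phi A (mkX T).
Proof.
move=> TA; apply/and3P; split.
- apply/subsetP => -[v|b]; rewrite inE.
    rewrite inl_GN in_setU => /orP [vT|vm]; first by rewrite (subsetP TA).
    by rewrite (subsetP (Vm_RA TA)) ?orbT.
  by move/eqP => ->; apply: src_GN.
- by rewrite inE.
- by rewrite inE.
Qed.

Lemma mkX_noinf (T : {set V}) : T \subset A ->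
  ~~ [exists u, exists v, crossing e theta phi A (mkX T) u v && (cap e theta phi p q A u v == Some None)].
Proof.
move=> TA; apply/existsP => -[u /existsP [v /andP [cr cp]]].
case: u v cr cp => [a|[]] [r|[]] //=; try by case: ifP.
rewrite /crossing in_setD; case: ifP => // /andP [aA ra] /and3P [ax rx _] _.
move: ax rx; rewrite !in_mkX => /orP [aT|/Vm_rej]; last by rewrite accA.
by rewrite (boundary_Vm aT ra) orbT.
Qed.

Lemma mkX_value (T : {set V}) : T \subset A ->
  cut_value e theta phi p q A (mkX T) = Some (Fv T).
Proof.
move=> TA; rewrite /cut_value (negbTE (mkX_noinf TA)) (cut_sum p q (mkX_cut TA)).
congr Some; rewrite /Fv; congr (_ + _).
  apply: eq_bigl => a; rewrite in_mkX; case aA: (a \in A) => //=.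
  by case: (a \in T) => //=; case: (boolP (a \in Vm T)) => // /Vm_rej; rewrite accA.
rewrite (eq_bigl (fun x => x \in Vm T)); first by rewrite sumr_const mulr_natr.
move=> x; rewrite in_mkX; apply/andP/idP => [[xR /orP [xT|//]]|xm].
  by move: (RA_rej xR); rewrite accA // (subsetP TA).
by rewrite xm orbT (subsetP (Vm_RA TA)).
Qed.

Lemma X_lower (X : {set node V}) : 0 <= q -> is_cut e theta phi A X ->
  ~~ [exists u, exists v, crossing e theta phi A X u v && (cap e theta phi p q A u v == Some None)] ->
  Fv (seeds_of_cut A X) <=
  \sum_u \sum_(v | crossing e theta phi A X u v) fincap (cap e theta phi p q A u v).
Proof.
move=> q0 cX hX; rewrite (cut_sum p q cX) /Fv.
set T := seeds_of_cut A X.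
have TX a r : a \in T -> r \in boundary e theta phi a -> inl r \in X.
  move=> aT ra; apply: contraNT hX => rX; apply/existsP; exists (inl a); apply/existsP; exists (inl r).
  move: aT; rewrite /T /seeds_of_cut !inE => /andP [aA ax].
  rewrite /crossing in_setD ax rX inl_GN in_setU /= aA ra /=.
  by rewrite orbC (_ : r \in RA) //; apply/bigcupP; exists a.
rewrite [X in X + _ <= _](eq_bigl (fun a => (a \in A) && (inl a \notin X))); last first.
  by move=> a; rewrite /T /seeds_of_cut !inE; case: (a \in A).
set W := [set x in RA | inl x \in X].
rewrite [X in _ <= _ + X](eq_bigl (fun x => x \in W)); last by move=> x; rewrite /W in_set.
rewrite lerD2l sumr_const -[q *+ _]mulr_natr ler_wpM2l // ler_nat.
apply: subset_leq_card; apply/subsetP => x xm.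
have [a aT xa] := Vm_boundary xm.
rewrite /W in_set (TX a x aT xa) andbT; apply/bigcupP; exists a => //.
by move: aT; rewrite /T /seeds_of_cut in_setI => /andP [].
Qed.



Lemma reps (S : {set V}) : seed_set theta phi S ->
  exists2 TS : {set V}, TS \subset A & payoff e theta phi p q S = payoff e theta phi p q TS.
Proof.
move=> sS; set TS := [set a in A | [exists i in S, cluster e theta phi a == cluster e theta phi i]].
exists TS; first by apply/subsetP => a; rewrite inE => /andP [].
suff H : Vreach e theta phi S = Vreach e theta phi TS by rewrite /payoff /Vplus /Vminus H.
rewrite !Vreach_bigcup; apply/setP => x; apply/bigcupP/bigcupP => [[i iS xi]|[a aT xa]].
  have acci : acc i by move/forallP: sS => /(_ i) /implyP; apply.
  case: canA => _ ex _; have [a aA ca] := ex i acci.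
  exists a; last by rewrite ca.
  by rewrite inE aA; apply/existsP; exists i; rewrite iS ca eqxx.
move: aT; rewrite inE => /andP [_ /existsP [i /andP [iS /eqP ca]]].
by exists i => //; rewrite -ca.
Qed.
End Main.

Theorem mainTheorem3 (R : realFieldType) (V : finType) (e : rel V)
    (theta : V -> R) (phi p q : R) (A : {set V}) (X : {set node V}) :
  symmetric e ->
  (forall i, 0 <= theta i <= 1) -> 0 <= phi <= 1 ->
  0 < p -> 0 < q ->
  canonical_set e theta phi A ->
  min_cut e theta phi p q A X ->
  seed_set theta phi (seeds_of_cut A X) /\
  forall S : {set V}, seed_set theta phi S ->
    payoff e theta phi p q S <= payoff e theta phi p q (seeds_of_cut A X).
Proof.
move=> esym _ _ p0 q0 canA [cX minX]; split.
  apply/forallP => i; apply/implyP; rewrite /seeds_of_cut in_setI => /andP [iA _].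
  exact: (accA canA iA).
move=> S sS.
have [TS TSA ->] := reps p q canA sS.
have TA : seeds_of_cut A X \subset A by apply/subsetP => a; rewrite in_setI => /andP [].
have h0 := minX _ (mkX_cut e theta phi (sub0set A)).
rewrite (mkX_value p q canA (sub0set A)) in h0.
have hX : ~~ [exists u, exists v, crossing e theta phi A X u v && (cap e theta phi p q A u v == Some None)].
  by move: h0; rewrite /cut_value; case: ifP.
have h1 := minX _ (mkX_cut e theta phi TSA).
rewrite (mkX_value p q canA TSA) /cut_value (negbTE hX) /= in h1.
have h2 := X_lower (ltW q0) cX hX.
have := le_trans h2 h1.
rewrite (Fv_payoff p q esym canA TA) (Fv_payoff p q esym canA TSA).
by rewrite lerD2l lerN2.
Qed.
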